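(* Let $G=(V,E)$ with $|V|\ge 3$, $N\ge3$, $\varepsilon=0$ and $s_0\in S_{nc}$. Then for every $\gamma\in(0,1)$, the game $\Gamma_N(G|s_0,\gamma,0)$ has a nonpositional trigger strategies profile $\bar\sigma$.
   Context: Setting. $G=(V,E)$ is a finite, simple, connected, undirected graph; $N\ge 3$ is an integer; $\gamma\in(0,1)$ and $\varepsilon\in[0,\frac1{N-1}]$ are parameters. There are $N$ tokens: cops $C_1,\dots,C_{N-1}$ (tokens $1,\dots,N-1$) and the robber $R$ (token $N$). A state is $s=(x^1,\dots,x^N,n)$ where $x^i\in V$ is the position of token $i$ and $n\in\{1,\dots,N\}$ is the token that moves next; $S^n$ denotes the set of states with token $n$ to move. A state is a capture state if $x^i=x^N$ for some $i\le N-1$; $S_{nc}$ is the set of noncapture states. In each turn exactly one token, the one to move, moves to a vertex of its closed neighbourhood (it may stay put); the order of moves is $C_1,C_2,\dots,C_{N-1},R,C_1,\dots$. Starting from an initial state $s_0\in S_{nc}$ at time $0$, the capture time is the first time $t$ at which a capture state occurs (infinite if never); after capture the game is over. Auxiliary games. For $m\in\{1,\dots,N\}$, $\Gamma_N^m(G|s_0,\gamma,\varepsilon)$ is the two-player zero-sum game in which player $P_m$ controls token $m$ and player $P_{-m}$ controls all other tokens, with the following payoff to $P_m$ ($P_{-m}$ receives its negative): $0$ if no capture ever occurs; if capture occurs at time $t$: for $m=N$, $-\gamma^t$; for $m\le N-1$, $\frac{1-\varepsilon}{K}\gamma^t$ if exactly $K\in\{1,\dots,N-2\}$ cops, including $C_m$,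 are on the robber's vertex, $\frac{\varepsilon}{N-K-1}\gamma^t$ if exactly $K\in\{1,\dots,N-2\}$ cops, not including $C_m$, are on the robber's vertex, and $\frac{\gamma^t}{N-1}$ if all $N-1$ cops are on the robber's vertex. $\Gamma^N_N$ is the modified cops-and-robber (CR) game. A pure positional strategy for token $n$ maps each state in $S^n\cap S_{nc}$ to an allowed next vertex. Each $\Gamma^m_N$ has optimal pure positional strategies (optimal from every initial state). For $m,n\in\{1,\dots,N\}$, $\phi^n_m$ denotes the strategy of token $n$ in a chosen pair of optimal pure positional strategies of $\Gamma^m_N$ (so $\phi^m_m$ is $P_m$'s optimal strategy and $(\phi^n_m)_{n\ne m}$ is $P_{-m}$'s). $\widehat\Sigma^n$ is the set of pure positional strategies of token $n$ that are components of optimal strategy pairs of $\Gamma^N_N$ (CR-optimal strategies). Trigger strategies. Given a choice of $(\phi^n_m)_{n,m}$, the trigger strategies profile $\bar\sigma=(\bar\sigma^1,\dots,\bar\sigma^N)$ of the $N$-player SCAR game $\Gamma_N(G|s_0,\gamma,\varepsilon)$ (same board and moves; player $n$ controls token $n$) is: token $n$, at current state $s$, plays $\phi^n_n(s)$ as long as every other player $m$ has followed $\phi^m_m$, and plays $\phi^n_m(s)$ from the moment a player $m\neq n$ deviates from $\phi^m_m$. Different choices of the optimal strategies give different trigger strategies profiles. $\bar\sigma$ is called positional if for all $n,m\in\{1,\dots,N\}$ there is $\widehat\sigma^n\in\widehat\Sigma^n$ with $\phi^n_m(s)=\widehat\sigma^n(s)$ for every state $s\in S^n\cap S_{nc}$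 reachable from $s_0$ by a finite sequence of legal moves passing only through noncapture states; otherwise $\bar\sigma$ is nonpositional. *)

(* Defs.v *)
From Stdlib Require Import Reals ClassicalEpsilon.
From mathcomp Require Import all_boot.

Set Implicit Arguments.
Unset Strict Implicit.
Unset Printing Implicit Defensive.

Section SCAR.

Variables (V : finType) (e : rel V) (N : nat).

(* Tokens are 'I_N : indices 0 .. N-2 are the cops C_1 .. C_{N-1},
   index N-1 is the robber R. *)
Definition is_rob (i : 'I_N) : bool := (i : nat) == N.-1.
Definition is_cop (i : 'I_N) : bool := (i : nat) < N.-1.

Definition state : finType := ({ffun 'I_N -> V} * 'I_N)%type.

Definition pos (s : state) (i : 'I_N) : V := s.1 i.
Definition mover (s : state) : 'I_N := s.2.

Definition near (u v : V) : bool := (u == v) || e u v.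

Definition on_rob (s : state) (i : 'I_N) : bool :=
  [exists j : 'I_N, is_rob j && (pos s i == pos s j)].

Definition captured (s : state) : bool :=
  [exists i : 'I_N, is_cop i && on_rob s i].

(* the token to move moves to v; the turn passes cyclically
   C_1, ..., C_{N-1}, R, C_1, ... *)
Definition move (s : state) (v : V) : state :=
  ([ffun i => if i == mover s then v else pos s i], @ordS N (mover s)).

(* General (history-dependent) pure strategy of a token: it sees the initial
   state and the sequence of subsequent states (current state = last). *)
Definition gstrat := state -> seq state -> V.

(* Pure positional strategy of a token: a function of the current state
   (only its values on S^n ∩ S_nc matter). *)
Definition pstrat := state -> V.

Definition lift (phi : pstrat) : gstrat := fun s0 h => phi (last s0 h).

Definition legal_g (n : 'I_N) (tau : gstrat) : Prop :=
  forall s0 h, let s := last s0 h in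
    mover s = n -> ~~ captured s -> near (pos s n) (tau s0 h).

Definition legal_p (n : 'I_N) (phi : pstrat) : Prop :=
  forall s, mover s = n -> ~~ captured s -> near (pos s n) (phi s).

(* The play generated by a profile of strategies: hist t = [s_1; ...; s_t]. *)
Fixpoint hist (sig : 'I_N -> gstrat) (s0 : state) (t : nat) : seq state :=
  match t with
  | 0 => [::]
  | t'.+1 => let h := hist sig s0 t' in
             let s := last s0 h in
             rcons h (move s (sig (mover s) s0 h))
  end.

Definition state_at sig s0 t : state := last s0 (hist sig s0 t).

Open Scope R_scope.

(* Coefficient of gamma^t in the payoff of player P_m of Γ^m_N when the
   capture state is s (K = number of cops on the robber's vertex). *)
Definition coef (eps : R) (m : 'I_N) (s : state) : R :=
  if is_rob m then -1 else
  let K := #|[set i : 'I_N | is_cop i && on_rob s i]| in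
  if K == N.-1 then / INR (N - 1)
  else if on_rob s m then (1 - eps) / INR K
  else eps / INR (N - K - 1).

Definition payoff (gamma eps : R) (m : 'I_N) (sig : 'I_N -> gstrat)
  (s0 : state) : R :=
  match excluded_middle_informative
          (exists t, captured (state_at sig s0 t)) with
  | left H =>
      let t := ex_minn (P := fun t => captured (state_at sig s0 t)) H in
      gamma ^ t * coef eps m (state_at sig s0 t)
  | right _ => 0
  end.

(* phi is a pair of optimal pure positional strategies of Γ^m_N
   (phi m for P_m, (phi n)_{n <> m} for P_{-m}), optimal from every
   initial noncapture state: a saddle point against all (possibly
   history-dependent) legal strategies. *)
Definition opt_pair (gamma eps : R) (m : 'I_N) (phi : 'I_N -> pstrat) : Prop :=
  (forall n, legal_p n (phi n)) /\
  forall s0 : state, ~~ captured s0 ->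
    (forall tau : gstrat, legal_g m tau ->
       payoff gamma eps m (fun n => if n == m then tau else lift (phi n)) s0
       <= payoff gamma eps m (fun n => lift (phi n)) s0) /\
    (forall tau : 'I_N -> gstrat, (forall n, n != m -> legal_g n (tau n)) ->
       payoff gamma eps m (fun n => lift (phi n)) s0
       <= payoff gamma eps m
            (fun n => if n == m then lift (phi m) else tau n) s0).

(* CR-optimal strategies \hat\Sigma^n : positional strategies of token n that
   are components of optimal strategy pairs of Γ^N_N (the game of the robber);
   compared on the states where they are used (S^n ∩ S_nc). *)
Definition CR_optimal (gamma eps : R) (n : 'I_N) (sh : pstrat) : Prop :=
  exists (r : 'I_N) (psi : 'I_N -> pstrat),
    is_rob r /\ opt_pair gamma eps r psi /\
    forall s, mover s = n -> ~~ captured s -> psi n s = sh s.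

Inductive reachable (s0 : state) : state -> Prop :=
  | reach0 : reachable s0 s0
  | reachS s v : reachable s0 s -> ~~ captured s -> near (pos s (mover s)) v ->
                 reachable s0 (move s v).

(* A choice Phi m n = phi^n_m of optimal strategy pairs of all the Γ^m_N. *)
Definition optimal_choice (gamma eps : R) (Phi : 'I_N -> 'I_N -> pstrat) : Prop :=
  forall m, opt_pair gamma eps m (Phi m).

Definition trigger_positional (gamma eps : R) (s0 : state)
  (Phi : 'I_N -> 'I_N -> pstrat) : Prop :=
  forall n m : 'I_N, exists sh : pstrat,
    CR_optimal gamma eps n sh /\
    forall s, reachable s0 s -> mover s = n -> ~~ captured s ->
      Phi m n s = sh s.

Definition trigger_nonpositional gamma eps s0 Phi : Prop :=
  ~ trigger_positional gamma eps s0 Phi.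

End SCAR.

(* Main.v *)
Require Import Defs.
From Stdlib Require Import Reals Lra ClassicalEpsilon FunctionalExtensionality.
From mathcomp Require Import all_boot zify.
Import Defs.
Local Open Scope R_scope.

Set Implicit Arguments.
Unset Strict Implicit.
Unset Printing Implicit Defensive.

Section Basic.
Variables (V : finType) (e : rel V) (N : nat).

Lemma pos_move (s : state V N) v i :
  pos (move s v) i = if i == mover s then v else pos s i.
Proof. by rewrite /pos /move /= ffunE. Qed.

Lemma mover_move (s : state V N) v : mover (move s v) = ordS (mover s).
Proof. by []. Qed.

Lemma on_rob_ext (s s' : state V N) i :
  (forall j, pos s j = pos s' j) -> on_rob s i = on_rob s' i.
Proof.
move=> H; rewrite /on_rob; apply: eq_existsb => j; by rewrite !H.
Qed.

Lemma captured_ext (s s' : state V N) :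
  (forall j, pos s j = pos s' j) -> captured s = captured s'.
Proof.
move=> H; rewrite /captured; apply: eq_existsb => j; by rewrite (on_rob_ext j H).
Qed.

Lemma pos_stay (s : state V N) j : pos (move s (pos s (mover s))) j = pos s j.
Proof. rewrite pos_move; by case: eqP => [->|]. Qed.

Lemma near_refl u : near e u u.
Proof. by rewrite /near eqxx. Qed.

Fixpoint optl (mx : bool) (f : V -> R) (d : V) (l : seq V) : V :=
  match l with
  | [::] => d
  | x :: l' => let y := optl mx f d l' in
      if mx then (if Rlt_dec (f y) (f x) then x else y)
      else (if Rlt_dec (f x) (f y) then x else y)
  end.

Lemma optl_mem mx f d l : optl mx f d l = d \/ optl mx f d l \in l.
Proof.
elim: l => [|x l IH] /=; first by left.
have H2 : (optl mx f d l = d \/ optl mx f d l \in x :: l).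
  by case: IH => [->|H]; [left|right; rewrite inE H orbT].
have H1 : (x = d \/ x \in x :: l) by right; rewrite inE eqxx.
by clear IH; case: mx H2 => H2; case: Rlt_dec.
Qed.

Lemma optl_max f d l x : (x = d \/ x \in l) -> f x <= f (optl true f d l).
Proof.
elim: l => [|y l IH] /=; first by case=> [->|//]; lra.
rewrite inE => Hx.
have [Exy|Nxy] := eqVneq x y.
  subst y; case: Rlt_dec => H /=; [|have := Rnot_lt_le _ _ H]; lra.
have Hx' : x = d \/ x \in l by case: Hx => [->|/orP[/eqP E|Hl]]; [left|rewrite E eqxx in Nxy|right].
move: (IH Hx'); case: Rlt_dec => H /=; [|have := Rnot_lt_le _ _ H]; lra.
Qed.

Lemma optl_min f d l x : (x = d \/ x \in l) -> f (optl false f d l) <= f x.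
Proof.
elim: l => [|y l IH] /=; first by case=> [->|//]; lra.
rewrite inE => Hx.
have [Exy|Nxy] := eqVneq x y.
  subst y; case: Rlt_dec => H /=; [|have := Rnot_lt_le _ _ H]; lra.
have Hx' : x = d \/ x \in l by case: Hx => [->|/orP[/eqP E|Hl]]; [left|rewrite E eqxx in Nxy|right].
move: (IH Hx'); case: Rlt_dec => H /=; [|have := Rnot_lt_le _ _ H]; lra.
Qed.
End Basic.
Lemma fin_bound (T : eqType) (f : T -> R) (l : seq T) :
  exists B, 0 <= B /\ forall x, x \in l -> Rabs (f x) <= B.
Proof.
elim: l => [|y l [B [HB IH]]]; first by exists 0; split; [lra|].
exists (Rmax B (Rabs (f y))); split.
  apply: Rle_trans (Rmax_l _ _); lra.
move=> x; rewrite inE => /orP[/eqP->|Hx]; first exact: Rmax_r.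
apply: Rle_trans (Rmax_l _ _); exact: IH.
Qed.

Lemma fin_boundT (T : finType) (f : T -> R) :
  exists B, 0 <= B /\ forall x, Rabs (f x) <= B.
Proof.
have [B [HB H]] := fin_bound f (enum T).
by exists B; split => // x; apply: H; rewrite mem_enum.
Qed.

Section Game.
Variables (V : finType) (e : rel V) (N : nat) (gamma eps : R) (m : 'I_N).
Hypotheses (g0 : 0 < gamma) (g1 : gamma < 1).

Definition lgl (s : state V N) := [seq v <- enum V | near e (pos s (mover s)) v].
Definition GU (U : state V N -> R) (s : state V N) :=
  if captured s then coef eps m s else U s.
Definition gr (U : state V N -> R) (s : state V N) : V :=
  optl (mover s == m) (fun v => GU U (move s v)) (pos s (mover s)) (lgl s).
Definition TB (U : state V N -> R) (s : state V N) : R :=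
  gamma * GU U (move s (gr U s)).

Lemma in_lgl s v : near e (pos s (mover s)) v -> v = pos s (mover s) \/ v \in lgl s.
Proof. by move=> H; right; rewrite mem_filter mem_enum andbT. Qed.

Lemma gr_legal U s : near e (pos s (mover s)) (gr U s).
Proof.
rewrite /gr; case: (optl_mem (mover s == m) (fun v => GU U (move s v)) (pos s (mover s)) (lgl s)) => [->|]; first exact: near_refl.
by rewrite mem_filter => /andP[].
Qed.

Lemma gr_max U s v : mover s == m -> near e (pos s (mover s)) v ->
  GU U (move s v) <= GU U (move s (gr U s)).
Proof. by move=> Hm Hv; rewrite /gr Hm; exact: (optl_max (fun v => GU U (move s v)) (in_lgl Hv)). Qed.

Lemma gr_min U s v : mover s != m -> near e (pos s (mover s)) v ->
  GU U (move s (gr U s)) <= GU U (move s v).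
Proof. by move=> Hm Hv; rewrite /gr (negbTE Hm); exact: (optl_min (fun v => GU U (move s v)) (in_lgl Hv)). Qed.

Lemma GU_lip u w d x : 0 <= d -> (forall s, u s <= w s + d) -> GU u x <= GU w x + d.
Proof. move=> Hd H; rewrite /GU; case: captured; [lra|exact: H]. Qed.

Lemma TB_lip1 u w d : 0 <= d -> (forall s, u s <= w s + d) ->
  forall s, TB u s <= TB w s + gamma * d.
Proof.
move=> Hd H s; rewrite /TB.
have [Hm|Hm] := boolP (mover s == m).
- have H1 := GU_lip (move s (gr u s)) Hd H.
  have H2 := gr_max w Hm (gr_legal u s).
  nra.
- have H1 := GU_lip (move s (gr w s)) Hd H.
  have H2 := gr_min u Hm (gr_legal w s).
  nra.
Qed.

Lemma TB_mono u w : (forall s, u s <= w s) -> forall s, TB u s <= TB w s.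
Proof.
move=> H s; have := @TB_lip1 u w 0 (Rle_refl 0) ltac:(move=> x; have := H x; lra) s.
lra.
Qed.
Lemma abs_le x a : Rabs x <= a -> -a <= x <= a.
Proof. move=> H; have := Rle_abs x; have := Rle_abs (-x); rewrite Rabs_Ropp; lra. Qed.

Definition Mc : R := proj1_sig (constructive_indefinite_description _
   (fin_boundT (fun s : state V N => coef eps m s))).
Lemma Mc_spec : 0 <= Mc /\ forall s : state V N, Rabs (coef eps m s) <= Mc.
Proof. rewrite /Mc; by case: (constructive_indefinite_description _ _). Qed.

Definition uk (k : nat) : state V N -> R := iter k TB (fun _ => - Mc).

Lemma GU_bound u x : (forall s, -Mc <= u s <= Mc) -> -Mc <= GU u x <= Mc.
Proof.
move=> H; rewrite /GU; case: captured; last exact: H.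
have [_ H2] := Mc_spec; have := H2 x; move/abs_le; lra.
Qed.

Lemma uk_bound k s : -Mc <= uk k s <= Mc.
Proof.
have [HM _] := Mc_spec.
elim: k s => [|k IH] s /=; first lra.
rewrite /TB; have := GU_bound (move s (gr (uk k) s)) IH; nra.
Qed.

Lemma uk_grow k s : uk k s <= uk k.+1 s.
Proof.
have [HM _] := Mc_spec.
elim: k s => [|k IH] s.
  rewrite /= /TB; have := @GU_bound (fun _ => - Mc) (move s (gr (fun _ => - Mc) s)) (fun s => uk_bound 0 s).
  move=> [H1 H2]; set G := GU _ _ in H1 H2 *; have := Rmult_le_compat_l gamma _ _ (Rlt_le _ _ g0) H1; nra.
rewrite [uk k.+1 s]/= [uk k.+2 s]/=; exact: TB_mono.
Qed.

Lemma uk_ub s : has_ub (fun k => uk k s).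
Proof. exists Mc => x [i ->]; have := uk_bound i s; lra. Qed.

Definition Ufix (s : state V N) : R :=
  proj1_sig (growing_cv (fun k => uk k s) (fun k => uk_grow k s) (uk_ub s)).

Lemma Ufix_cv s : Un_cv (fun k => uk k s) (Ufix s).
Proof. exact: proj2_sig (growing_cv _ _ _). Qed.

Lemma uk_unif_l eps0 (l : seq (state V N)) : 0 < eps0 ->
  exists K, forall k, (K <= k)%N -> forall s, s \in l -> Rabs (uk k s - Ufix s) < eps0.
Proof.
move=> He; elim: l => [|x l [K IH]]; first by exists 0%N.
have [K2 H2] := Ufix_cv x He.
exists (maxn K K2) => k Hk s; rewrite inE => /orP[/eqP->|Hs].
  apply: H2; apply/leP; apply: leq_trans Hk; exact: leq_maxr.
apply: IH => //; apply: leq_trans Hk; exact: leq_maxl.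
Qed.

Lemma uk_unif eps0 : 0 < eps0 ->
  exists K, forall k, (K <= k)%N -> forall s, Rabs (uk k s - Ufix s) < eps0.
Proof.
move=> He; have [K H] := uk_unif_l (enum (state V N)) He.
by exists K => k Hk s; apply: H => //; rewrite mem_enum.
Qed.

Lemma Ufix_fix s : Ufix s = TB Ufix s.
Proof.
apply: (@UL_sequence (fun k => uk k.+1 s)).
- move=> eps0 He; have [K HK] := Ufix_cv s He.
  exists K => n Hn; apply: HK; apply/leP; apply: leq_trans (leqnSn n); exact/leP.
- move=> eps0 He; have [K HK] := uk_unif He.
  exists K => n /leP Hn; rewrite /Rdist /=.
  have H1 := @TB_lip1 (uk n) Ufix eps0 (Rlt_le _ _ He)
     ltac:(move=> x; have := HK n Hn x; move/Rabs_def2; lra) s.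
  have H2 := @TB_lip1 Ufix (uk n) eps0 (Rlt_le _ _ He)
     ltac:(move=> x; have := HK n Hn x; move/Rabs_def2; lra) s.
  apply: Rabs_def1; nra.
Qed.
Lemma state_at0 sig (s0 : state V N) : state_at sig s0 0 = s0.
Proof. by []. Qed.

Lemma state_atS sig (s0 : state V N) t :
  state_at sig s0 t.+1 =
  move (state_at sig s0 t) (sig (mover (state_at sig s0 t)) s0 (hist sig s0 t)).
Proof. by rewrite /state_at /= last_rcons. Qed.

Lemma lift_at (phi : pstrat V N) sig (s0 : state V N) t :
  lift phi s0 (hist sig s0 t) = phi (state_at sig s0 t).
Proof. by []. Qed.

Lemma payoff_cases sig (s0 : state V N) :
  (payoff gamma eps m sig s0 = 0 /\ forall t, ~~ captured (state_at sig s0 t)) \/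
  exists t, captured (state_at sig s0 t) /\
    (forall t', (t' < t)%N -> ~~ captured (state_at sig s0 t')) /\
    payoff gamma eps m sig s0 = gamma ^ t * coef eps m (state_at sig s0 t).
Proof.
rewrite /payoff; case: excluded_middle_informative => H.
- right; case: ex_minnP => t Ht Hmin; exists t; split => //; split => //.
  move=> t' Ht'; apply/negP => C; have := Hmin t' C; by rewrite leqNgt Ht'.
- left; split => // t; apply/negP => C; apply: H; by exists t.
Qed.

Lemma Ubound (U : state V N -> R) : exists B, 0 <= B /\ forall s, Rabs (U s) <= B.
Proof. exact: fin_boundT. Qed.

Lemma small_pow B a : 0 <= B -> a < 0 -> exists t, gamma ^ t * B < - a.
Proof.
move=> HB Ha.
have Hg : Rabs gamma < 1 by rewrite Rabs_right; lra.
have Hy : 0 < - a / (B + 1) by apply: Rdiv_lt_0_compat; lra.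
have [K HK] := pow_lt_1_zero gamma Hg (- a / (B + 1)) Hy.
exists K; have := HK K (le_n K); rewrite Rabs_right; last by apply: Rle_ge; apply: pow_le; lra.
move=> H; have E : - a / (B + 1) * (B + 1) = - a by field; lra.
have := pow_le gamma K (Rlt_le _ _ g0); nra.
Qed.

Lemma payoff_leU U sig (s0 : state V N) : ~~ captured s0 ->
  (forall t, ~~ captured (state_at sig s0 t) ->
     gamma * GU U (state_at sig s0 t.+1) <= U (state_at sig s0 t)) ->
  payoff gamma eps m sig s0 <= U s0.
Proof.
move=> Hs0 Hstep.
have key : forall t, (forall t', (t' < t)%N -> ~~ captured (state_at sig s0 t')) ->
    gamma ^ t * GU U (state_at sig s0 t) <= U s0.
  elim=> [|t IH] Hpre.
    by rewrite state_at0 /= /GU (negbTE Hs0); lra.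
  have Ht : ~~ captured (state_at sig s0 t) by apply: Hpre.
  have := IH (fun t' Ht' => Hpre t' (ltn_trans Ht' (ltnSn t))).
  have := Hstep t Ht; rewrite {2}/GU (negbTE Ht) /= => H1 H2.
  have := pow_le gamma t (Rlt_le _ _ g0); nra.
case: (payoff_cases sig s0) => [[-> Hnc]|[t [Hc [Hpre ->]]]].
- apply: Rnot_lt_le => Hlt.
  have [B [HB HU]] := Ubound U.
  have [t Ht] := small_pow HB Hlt.
  have := key t (fun t' _ => Hnc t'); rewrite /GU (negbTE (Hnc t)).
  have := HU (state_at sig s0 t); move/abs_le => [H1 H2].
  have := pow_le gamma t (Rlt_le _ _ g0); nra.
- have := key t Hpre; by rewrite /GU Hc.
Qed.

Lemma payoff_geU U sig (s0 : state V N) : ~~ captured s0 ->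
  (forall t, ~~ captured (state_at sig s0 t) ->
     U (state_at sig s0 t) <= gamma * GU U (state_at sig s0 t.+1)) ->
  U s0 <= payoff gamma eps m sig s0.
Proof.
move=> Hs0 Hstep.
have key : forall t, (forall t', (t' < t)%N -> ~~ captured (state_at sig s0 t')) ->
    U s0 <= gamma ^ t * GU U (state_at sig s0 t).
  elim=> [|t IH] Hpre.
    by rewrite state_at0 /= /GU (negbTE Hs0); lra.
  have Ht : ~~ captured (state_at sig s0 t) by apply: Hpre.
  have := IH (fun t' Ht' => Hpre t' (ltn_trans Ht' (ltnSn t))).
  have := Hstep t Ht; rewrite {2}/GU (negbTE Ht) /= => H1 H2.
  have := pow_le gamma t (Rlt_le _ _ g0); nra.
case: (payoff_cases sig s0) => [[-> Hnc]|[t [Hc [Hpre ->]]]].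
- apply: Rnot_lt_le => Hlt.
  have [B [HB HU]] := Ubound U.
  have [t Ht] := @small_pow B (- U s0) HB ltac:(lra).
  have := key t (fun t' _ => Hnc t'); rewrite /GU (negbTE (Hnc t)).
  have := HU (state_at sig s0 t); move/abs_le => [H1 H2].
  have := pow_le gamma t (Rlt_le _ _ g0); nra.
- have := key t Hpre; by rewrite /GU Hc.
Qed.
Lemma Ufix_max s v : mover s == m -> near e (pos s (mover s)) v ->
  gamma * GU Ufix (move s v) <= Ufix s.
Proof.
move=> Hm Hv; rewrite (Ufix_fix s) /TB; have := gr_max Ufix Hm Hv.
have := Rlt_le _ _ g0; nra.
Qed.

Lemma Ufix_min s v : mover s != m -> near e (pos s (mover s)) v ->
  Ufix s <= gamma * GU Ufix (move s v).
Proof.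
move=> Hm Hv; rewrite (Ufix_fix s) /TB; have := gr_min Ufix Hm Hv.
have := Rlt_le _ _ g0; nra.
Qed.

Lemma greedy_opt (phi : 'I_N -> pstrat V N) :
  (forall n, legal_p e n (phi n)) ->
  (forall s, ~~ captured s -> Ufix s = gamma * GU Ufix (move s (phi (mover s) s))) ->
  opt_pair e gamma eps m phi.
Proof.
move=> Hleg Hbell; split => // s0 Hs0.
have Pl : payoff gamma eps m (fun n => lift (phi n)) s0 <= Ufix s0.
  apply: payoff_leU => // t Ht; rewrite state_atS /=; rewrite -Hbell //; lra.
have Pg : Ufix s0 <= payoff gamma eps m (fun n => lift (phi n)) s0.
  apply: payoff_geU => // t Ht; rewrite state_atS /=; rewrite -Hbell //; lra.
split.
- move=> tau Htau; apply: Rle_trans Pg; apply: payoff_leU => // t Ht.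
  rewrite state_atS /=.
  case: (eqVneq (mover (state_at (fun n => if n == m then tau else lift (phi n)) s0 t)) m) => Hm.
  + apply: Ufix_max; first by rewrite Hm.
    rewrite Hm; exact: (Htau s0 _ Hm Ht).
  + rewrite -Hbell //; lra.
- move=> tau Htau; apply: Rle_trans Pl _; apply: payoff_geU => // t Ht.
  rewrite state_atS /=.
  case: (eqVneq (mover (state_at (fun n => if n == m then lift (phi m) else tau n) s0 t)) m) => Hm.
  + set st := state_at _ s0 t; have E : lift (phi m) s0 (hist (fun n => if n == m then lift (phi m) else tau n) s0 t) = phi (mover st) st by rewrite Hm.
    rewrite E -Hbell //; lra.
  + apply: Ufix_min => //.
    exact: (Htau _ Hm s0 _ erefl Ht).
Qed.

Lemma gr_opt : opt_pair e gamma eps m (fun _ => gr Ufix).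
Proof.
apply: greedy_opt.
- move=> n s Hn _; rewrite -Hn; exact: gr_legal.
- move=> s _; exact: Ufix_fix.
Qed.

Lemma Ufix_payoff s0 : ~~ captured s0 ->
  Ufix s0 = payoff gamma eps m (fun _ => lift (gr Ufix)) s0.
Proof.
move=> Hs0; apply: Rle_antisym.
- apply: payoff_geU => // t Ht; rewrite state_atS /= lift_at [Ufix (state_at _ s0 t)]Ufix_fix /TB; lra.
- apply: payoff_leU => // t Ht; rewrite state_atS /= lift_at [Ufix (state_at _ s0 t)]Ufix_fix /TB; lra.
Qed.
End Game.

Section Reach.
Variables (V : finType) (e : rel V) (n : nat).
Notation S := (state V n.+1).
Notation rob := (@ord_max n).

Lemma is_rob_max (i : 'I_n.+1) : is_rob i = (i == rob).
Proof. by rewrite /is_rob /=; apply/eqP/eqP => [H|->]; [apply: val_inj|]. Qed.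

Lemma is_cop_max (i : 'I_n.+1) : is_cop i = (i != rob).
Proof.
rewrite /is_cop /=; have := ltn_ord i.
case: (eqVneq i rob) => [->|H] /=; first by rewrite ltnn.
move=> Hi; rewrite ltnS leq_eqVlt in Hi; case/orP: Hi => [/eqP E|->] //.
by case/eqP: H; apply: val_inj.
Qed.

Lemma on_rob_max (s : S) i : on_rob s i = (pos s i == pos s rob).
Proof.
rewrite /on_rob; apply/existsP/idP => [[j /andP[Hj E]]|E].
  by rewrite is_rob_max in Hj; move/eqP: Hj => <-.
by exists rob; rewrite is_rob_max eqxx.
Qed.

Lemma nocap (s : S) :
  ~~ captured s <-> forall i, i != rob -> pos s i != pos s rob.
Proof.
split.
- move=> H i Hi; apply/negP => E; apply: (negP H); apply/existsP; exists i.
  by rewrite is_cop_max Hi on_rob_max E.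
- move=> H; apply/negP => /existsP [i /andP[Hi E]].
  rewrite is_cop_max in Hi; rewrite on_rob_max in E.
  by rewrite (negbTE (H i Hi)) in E.
Qed.

Lemma reach_trans (s0 s1 s2 : S) :
  reachable e s0 s1 -> reachable e s1 s2 -> reachable e s0 s2.
Proof.
move=> H1 H2; elim: H2 => // s v _ IH Hc Hv; exact: reachS.
Qed.

Lemma stays (s : S) j : ~~ captured s ->
  exists s', reachable e s s' /\ (forall i, pos s' i = pos s i) /\
    (mover s' : nat) = ((mover s : nat) + j) %% n.+1.
Proof.
move=> Hs; elim: j => [|j [s' [R [P M]]]].
  exists s; split; first exact: reach0.
  by split => //; rewrite addn0 modn_small.
have Hs' : ~~ captured s' by rewrite (captured_ext P).
exists (move s' (pos s' (mover s'))); split.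
  apply: reach_trans R _; apply: reachS => //; first exact: reach0.
  exact: near_refl.
split; first by move=> i; rewrite pos_stay P.
by rewrite mover_move /= M -addn1 modnDml addn1 addnS.
Qed.

Lemma advance (s : S) (k : 'I_n.+1) : ~~ captured s ->
  exists s', reachable e s s' /\ (forall i, pos s' i = pos s i) /\ mover s' = k
     /\ ~~ captured s'.
Proof.
move=> Hs; have [s' [R [P M]]] := stays (n.+1 - mover s + k) Hs.
exists s'; split => //; split => //; split; last by rewrite (captured_ext P).
apply: ord_inj; rewrite M addnA subnKC; last exact: ltnW (ltn_ord _).
by rewrite modnDl modn_small.
Qed.

Lemma onestep (s : S) (i : 'I_n.+1) v : ~~ captured s -> near e (pos s i) v ->
  exists s', reachable e s s' /\
    (forall j, pos s' j = if j == i then v else pos s j).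
Proof.
move=> Hs Hv; have [s1 [R [P [M Hc]]]] := advance i Hs.
exists (move s1 v); split.
  apply: reach_trans R _; apply: reachS => //; first exact: reach0.
  by rewrite M P.
by move=> j; rewrite pos_move M P.
Qed.

Lemma walk (p : seq V) : forall (s : S), ~~ captured s -> path e (pos s rob) p ->
  (exists i, i != rob /\ pos s i = last (pos s rob) p) ->
  exists s', reachable e s s' /\ ~~ captured s' /\ mover s' = rob /\
    (forall i, i != rob -> pos s' i = pos s i) /\
    exists i, i != rob /\ e (pos s' rob) (pos s' i).
Proof.
elim: p => [|y p IH] s Hs.
  move=> _ [i [Hi E]]; by move/nocap: Hs => /(_ i Hi); rewrite E eqxx.
rewrite /= => /andP[Hy Hp] Hl.
case: (boolP [exists i, (i != rob) && (pos s i == y)]) => [/existsP [i /andP[Hi /eqP Ei]]|Hno].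
  have [s1 [R [P [M Hc]]]] := advance rob Hs.
  exists s1; split => //; split => //; split => //; split; first by move=> j _; rewrite P.
  by exists i; rewrite !P Ei.
have [s1 [R P]] := @onestep s rob y Hs (introT orP (or_intror Hy)).
have Hs1 : ~~ captured s1.
  apply/nocap => i Hi; rewrite !P eqxx (negbTE Hi).
  apply/negP => /eqP E; apply: (negP Hno); apply/existsP; exists i. by apply/andP; split => //; apply/eqP.
have Hp1 : path e (pos s1 rob) p by rewrite P eqxx.
have Hl1 : exists i, i != rob /\ pos s1 i = last (pos s1 rob) p.
  case: Hl => i [Hi Ei]; exists i; by rewrite !P eqxx (negbTE Hi).
have [s2 [R2 [Hc2 [M2 [P2 X2]]]]] := IH s1 Hs1 Hp1 Hl1.
exists s2; split; first exact: reach_trans R R2.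
do 3!(split => //).
move=> i Hi; by rewrite P2 // P (negbTE Hi).
Qed.
End Reach.

Lemma exit_path (V : finType) (e : rel V) (Sp : pred V) a p :
  Sp a -> path e a p -> ~~ Sp (last a p) -> exists u v, Sp u /\ ~~ Sp v /\ e u v.
Proof.
elim: p a => [|y p IH] a Ha /=; first by rewrite Ha.
case/andP => Hy Hp Hl; case: (boolP (Sp y)) => Hsy.
  exact: IH Hsy Hp Hl.
by exists a, y.
Qed.

Lemma third (V : finType) (r w : V) : (3 <= #|V|)%N -> exists z, z != r /\ z != w.
Proof.
move=> H3; case: (pickP [pred z | (z != r) && (z != w)]) => [z /andP[H1 H2]|Hn].
  by exists z.
have : (#|V| <= #|[set r; w]|)%N.
  apply: subset_leq_card; apply/subsetP => z _; rewrite !inE.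
  by move: (Hn z) => /= /negbT; rewrite negb_and !negbK.
rewrite cards2; case: (r != w) => /=; move=> H; have := leq_trans H3 H; by [].
Qed.

Section Config.
Variables (V : finType) (e : rel V) (n : nat).
Notation S := (state V n.+1).
Notation rob := (@ord_max n).

Lemma config (s0 : S) : symmetric e -> irreflexive e -> (forall u v : V, connect e u v) ->
  (3 <= #|V|)%N -> (2 <= n)%N -> ~~ captured s0 ->
  exists s m j, reachable e s0 s /\ ~~ captured s /\ mover s = rob /\
    m != rob /\ j != rob /\ e (pos s rob) (pos s j) /\ pos s m != pos s j.
Proof.
move=> Hsym Hirr Hcon H3 Hn Hs0.
have c1r : (ord0 : 'I_n.+1) != rob.
  by apply/eqP => /(congr1 (@nat_of_ord _)) /= E; move: Hn; rewrite -E.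
pose c2 : 'I_n.+1 := inord 1.
have vc2 : (c2 : nat) = 1%N by rewrite inordK //; lia.
have c2r : c2 != rob by apply/eqP => /(congr1 (@nat_of_ord _)); rewrite vc2 /= => E; move: Hn; rewrite -E.
have c12 : (ord0 : 'I_n.+1) != c2 by apply/eqP => /(congr1 (@nat_of_ord _)); rewrite vc2.
have [p Hp Hl] := connectP (Hcon (pos s0 rob) (pos s0 ord0)).
have Hex : exists i, i != rob /\ pos s0 i = last (pos s0 rob) p.
  by exists ord0; split => //; rewrite -Hl.
have [s1 [R1 [Hc1 [M1 [P1 [i0 [Hi0 Ew]]]]]]] := @walk V e n p s0 Hs0 Hp Hex.
case: (pickP [pred k : 'I_n.+1 | (k != rob) && (pos s1 k != pos s1 i0)]) =>
  [k /andP[Hk Hki]|Hall].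
  by exists s1, k, i0.
have Hall' : forall k, k != rob -> pos s1 k = pos s1 i0.
  move=> k Hk; have := Hall k; rewrite /= Hk /=; by move/negbFE/eqP.
set r := pos s1 rob in Ew Hall'; set w := pos s1 i0 in Ew Hall'.
have Hrw : r != w by apply/eqP => E; rewrite E Hirr in Ew.
have [z [Hzr Hzw]] := third r w H3.
have [q Hq Hql] := connectP (Hcon w z).
have Sw : [pred x | (x == r) || (x == w)] w by rewrite /= eqxx orbT.
have Sz : ~~ [pred x | (x == r) || (x == w)] (last w q) by rewrite /= -Hql negb_or Hzr Hzw.
have [u [v [Su [Sv Euv]]]] := @exit_path V e [pred x | (x == r) || (x == w)] w q Sw Hq Sz.
move: Su Sv; rewrite /= negb_or => /orP[/eqP Eu|/eqP Eu] /andP[Hvr Hvw]; subst u.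
- (* robber moves to v, then C1 moves onto r *)
  have [s2 [R2 P2]] := @onestep V e n s1 rob v Hc1 (introT orP (or_intror Euv)).
  have Hc2 : ~~ captured s2.
    apply/nocap => i Hi; rewrite !P2 eqxx (negbTE Hi) Hall' //.
    by rewrite eq_sym.
  have Hw2 : near e (pos s2 ord0) r.
    by rewrite P2 (negbTE c1r) Hall' // /near Hsym Ew orbT.
  have [s3 [R3 P3]] := @onestep V e n s2 ord0 r Hc2 Hw2.
  have Hc3 : ~~ captured s3.
    apply/nocap => i Hi; rewrite !P3 (eq_sym rob ord0) (negbTE c1r) !P2 eqxx (negbTE Hi).
    case: (i == ord0); first by rewrite eq_sym.
    by rewrite Hall' // eq_sym.
  have [s4 [R4 [P4 [M4 Hc4]]]] := @advance V e n s3 rob Hc3.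
  exists s4, c2, ord0; split; first exact: reach_trans (reach_trans R1 R2) (reach_trans R3 R4).
  split => //; split => //; split => //; split => //.
  rewrite !P4 !P3 eqxx (eq_sym rob ord0) (negbTE c1r) (eq_sym c2 ord0) (negbTE c12) !P2 eqxx (negbTE c2r) Hall' //.
  by split; [rewrite Hsym | rewrite eq_sym].
- (* C1 moves from w to v *)
  have Hw2 : near e (pos s1 ord0) v by rewrite Hall' // /near Euv orbT.
  have [s2 [R2 P2]] := @onestep V e n s1 ord0 v Hc1 Hw2.
  have Hc2 : ~~ captured s2.
    apply/nocap => i Hi; rewrite !P2 (eq_sym rob ord0) (negbTE c1r).
    by case: (i == ord0) => //; rewrite Hall' // eq_sym.
  have [s3 [R3 [P3 [M3 Hc3]]]] := @advance V e n s2 rob Hc2.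
  exists s3, ord0, c2; split; first exact: reach_trans R1 (reach_trans R2 R3).
  split => //; split => //; split => //; split => //.
  rewrite !P3 !P2 (eq_sym rob ord0) (negbTE c1r) eqxx (eq_sym c2 ord0) (negbTE c12).
  by rewrite (Hall' c2 c2r); split.
Qed.
End Config.

Section Final.
Variables (V : finType) (n : nat).
Notation S := (state V n.+1).
Notation rob := (@ord_max n).

Lemma card_cops_lt (s : S) (m : 'I_n.+1) : m != rob -> ~~ on_rob s m ->
  #|[set i | is_cop i && on_rob s i]| != n.+1.-1.
Proof.
move=> Hm Hno.
have sub : [set i | is_cop i && on_rob s i] \subset ~: [set rob; m].
  apply/subsetP => i; rewrite !inE is_cop_max => /andP[Hc Ho].
  rewrite negb_or Hc /=; apply/eqP => E; by rewrite -E Ho in Hno.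
have := subset_leq_card sub.
have := cardsC [set rob; m]; rewrite cards2 eq_sym Hm card_ord /=.
have Hn0 : (0 < n)%N.
  by move: Hm; clear; case: n m => [|k] // [[|i] Hi].
move=> Hc; lia.
Qed.

Lemma Rinv_nonneg x : 0 <= x -> 0 <= / x.
Proof.
move=> Hx; case: (Req_dec x 0) => [->|Hne]; first by rewrite Rinv_0; lra.
apply: Rlt_le; apply: Rinv_0_lt_compat; lra.
Qed.

Lemma coef_cop_nonneg (m : 'I_n.+1) (s : S) : m != rob -> 0 <= coef 0 m s.
Proof.
move=> Hm; rewrite /coef is_rob_max (negbTE Hm).
case: ifP => _; first by apply: Rinv_nonneg; apply: pos_INR.
case: ifP => _.
  rewrite /Rdiv; apply: Rmult_le_pos; [lra|apply: Rinv_nonneg; exact: pos_INR].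
rewrite /Rdiv Rmult_0_l; lra.
Qed.

Lemma coef_cop_zero (m : 'I_n.+1) (s : S) : m != rob -> ~~ on_rob s m -> coef 0 m s = 0.
Proof.
move=> Hm Hno; rewrite /coef is_rob_max (negbTE Hm).
by rewrite (negbTE (card_cops_lt Hm Hno)) (negbTE Hno) /Rdiv Rmult_0_l.
Qed.

Lemma coef_rob eps (s : S) : coef eps rob s = -1.
Proof. by rewrite /coef is_rob_max eqxx. Qed.

Lemma payoff_cop_nonneg gamma (m : 'I_n.+1) sig (s : S) : 0 < gamma -> m != rob ->
  0 <= payoff gamma 0 m sig s.
Proof.
move=> g0 Hm; case: (payoff_cases gamma 0 m sig s) => [[-> _]|[t [_ [_ ->]]]]; first lra.
apply: Rmult_le_pos; [apply: pow_le; lra | exact: coef_cop_nonneg].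
Qed.

Lemma pow_small gamma t : 0 < gamma -> gamma < 1 -> (2 <= t)%N -> gamma ^ t < gamma.
Proof.
move=> g0 g1; elim: t => [|t IH] //= Ht.
case: t IH Ht => [|t] IH Ht //.
case: t IH Ht => [|t] IH Ht.
  simpl; nra.
have := IH isT; simpl in *; nra.
Qed.

Lemma payoff_rob_first gamma eps sig (s : S) : ~~ captured s ->
  captured (state_at sig s 1) -> payoff gamma eps rob sig s = - gamma.
Proof.
move=> Hs H1; case: (payoff_cases gamma eps rob sig s) => [[_ Hn]|[t [Hc [Hpre ->]]]].
  by move: (Hn 1%N); rewrite H1.
case: t Hc Hpre => [|[|t]] Hc Hpre.
- by move: Hc; rewrite state_at0 (negbTE Hs).
- rewrite coef_rob /=; ring.
- by have := Hpre 1%N isT; rewrite H1.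
Qed.

Lemma payoff_rob_late gamma eps sig (s : S) : 0 < gamma -> gamma < 1 -> ~~ captured s ->
  ~~ captured (state_at sig s 1) -> - gamma < payoff gamma eps rob sig s.
Proof.
move=> g0 g1 Hs H1; case: (payoff_cases gamma eps rob sig s) => [[-> _]|[t [Hc [Hpre ->]]]].
  lra.
case: t Hc Hpre => [|[|t]] Hc Hpre.
- by move: Hc; rewrite state_at0 (negbTE Hs).
- by rewrite Hc in H1.
- rewrite coef_rob; have := @pow_small gamma t.+2 g0 g1 isT; lra.
Qed.
End Final.

Lemma main_aux (V : finType) (e : rel V) (N : nat) (s0 : state V N) :
  symmetric e -> irreflexive e -> (forall u v : V, connect e u v) ->
  (3 <= #|V|)%N -> (3 <= N)%N -> ~~ captured s0 ->
  forall gamma : R, Rlt 0 gamma /\ Rlt gamma 1 ->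
  exists Phi : 'I_N -> 'I_N -> pstrat V N,
    optimal_choice e (N:=N) gamma R0 Phi /\
    trigger_nonpositional e (N:=N) gamma R0 s0 Phi.
Proof.
move=> Hsym Hirr Hcon H3 HN Hs0 gamma [g0 g1].
case: N s0 Hs0 HN => [|n] s0 Hs0 HN; first by [].
have Hn : (1 < n)%N by lia.
have [ss [m0 [j [Rs [Hcs [Ms [Hm0 [Hj [Ew Hmj]]]]]]]]] := config Hsym Hirr Hcon H3 Hn Hs0.
have Hcapw : captured (move ss (pos ss j)).
  case: (boolP (captured (move ss (pos ss j)))) => // /nocap H; have := H j Hj.
  by rewrite !pos_move Ms eqxx (negbTE Hj) eqxx.
have Hnr : ~~ on_rob (move ss (pos ss j)) m0.
  by rewrite on_rob_max !pos_move Ms eqxx (negbTE Hm0).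
have Hcoef0 : coef 0 m0 (move ss (pos ss j)) = 0 by exact: coef_cop_zero.
have Hnear : near e (pos ss (mover ss)) (pos ss j) by rewrite Ms /near Ew orbT.
have HU0 : Ufix e 0 m0 g0 g1 ss = 0.
  apply: Rle_antisym.
  - have := @Ufix_min V e n.+1 gamma 0 m0 g0 g1 ss (pos ss j) ltac:(by rewrite Ms eq_sym) Hnear.
    by rewrite /GU Hcapw Hcoef0 Rmult_0_r.
  - rewrite (Ufix_payoff e 0 m0 g0 g1 Hcs); exact: payoff_cop_nonneg.
pose Phi : 'I_n.+1 -> 'I_n.+1 -> pstrat V n.+1 := fun m k s =>
  if (m == m0) && (k == ord_max) && (s == ss) then pos ss j
  else gr e 0 m (Ufix e 0 m g0 g1) s.
exists Phi; split.
- move=> m; apply: (@greedy_opt V e n.+1 gamma 0 m g0 g1).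
  + move=> k s Hk Hc; rewrite /Phi; case: ifP => [/andP[/andP[_ /eqP Hk'] /eqP Es]|_].
      by rewrite Es Hk' /near Ew orbT.
    rewrite -Hk; exact: gr_legal.
  + move=> s Hc; rewrite /Phi; case: ifP => [/andP[/andP[/eqP Em /eqP Ek] /eqP Es]|_].
      subst m s; by rewrite /GU Hcapw Hcoef0 HU0 Rmult_0_r.
    exact: Ufix_fix.
- move=> Hpos.
  have [sh [[r [psi [Hr [[Hleg Hopt] Hagr]]]] Hag]] := Hpos ord_max m0.
  have Er : r = ord_max by apply/eqP; rewrite -is_rob_max.
  subst r.
  have Hpsi : psi ord_max ss = pos ss j.
    rewrite Hagr // -Hag // /Phi !eqxx; by [].
  have [Hdev _] := Hopt ss Hcs.
  pose tau := lift (fun s => if s == ss then pos ss ord_max else psi ord_max s).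
  have Htau : legal_g e ord_max tau.
    move=> s1 h /= Hm Hc; rewrite /tau /lift.
    case: eqP => [->|_]; first exact: near_refl.
    exact: (Hleg ord_max _ Hm Hc).
  have := Hdev tau Htau.
  rewrite (@payoff_rob_first V n gamma 0 (fun k => lift (psi k)) ss Hcs).
    move=> Hle.
    have : - gamma < payoff gamma R0 ord_max
              (fun k => if k == ord_max then tau else lift (psi k)) ss.
      apply: payoff_rob_late => //.
      rewrite state_atS /= state_at0 Ms eqxx /tau /lift /= eqxx.
      rewrite (captured_ext (s' := ss)) // => i.
      by rewrite pos_move Ms; case: eqP => [->|].
    lra.
  by rewrite state_atS /= Ms state_at0 /lift /= Hpsi.
Qed.

Local Close Scope R_scope.

Theorem mainTheorem5 (V : finType) (e : rel V) (N : nat) (s0 : state V N) :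
  symmetric e -> irreflexive e -> (forall u v : V, connect e u v) ->
  3 <= #|V| -> 3 <= N -> ~~ captured s0 ->
  forall gamma : R, Rlt 0 gamma /\ Rlt gamma 1 ->
  exists Phi : 'I_N -> 'I_N -> pstrat V N,
    optimal_choice e (N:=N) gamma R0 Phi /\
    trigger_nonpositional e (N:=N) gamma R0 s0 Phi.
Proof. exact: main_aux. Qed.
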